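(* Let $\mathbf A$ be an algebra, $n\ge2$, $I$ a nonempty set, and $\rho_i$ ($i\in I$) and $\alpha_0,\dots,\alpha_{n-2}$ congruences of $\mathbf A$. Then \[ \Big[\alpha_0,\dots,\alpha_{n-2},\bigvee_{i\in I}\rho_i\Big]=\bigvee_{J}\Big[\alpha_0,\dots,\alpha_{n-2},\bigvee_{i\in J}\rho_i\Big], \] where $J$ ranges over all finite nonempty subsets of $I$.
   Context: Higher commutator (Bulatov): for congruences $\alpha_0,\dots,\alpha_{n-1},\gamma$ of an algebra $\mathbf A$, say $\alpha_0,\dots,\alpha_{n-2}$ centralize $\alpha_{n-1}$ modulo $\gamma$ if for all tuples $\mathbf a_i,\mathbf b_i$ ($i<n$, with $\mathbf a_i\neq\mathbf b_i$ congruent modulo $\alpha_i$ coordinatewise) and every term operation $t$ such that $t(\mathbf x_0,\dots,\mathbf x_{n-2},\mathbf a_{n-1})\equiv_\gamma t(\mathbf x_0,\dots,\mathbf x_{n-2},\mathbf b_{n-1})$ for all $(\mathbf x_0,\dots,\mathbf x_{n-2})\in(\{\mathbf a_0,\mathbf b_0\}\times\dots\times\{\mathbf a_{n-2},\mathbf b_{n-2}\})\setminus\{(\mathbf b_0,\dots,\mathbf b_{n-2})\}$, we have $t(\mathbf b_0,\dots,\mathbf b_{n-2},\mathbf a_{n-1})\equiv_\gamma t(\mathbf b_0,\dots,\mathbf b_{n-2},\mathbf b_{n-1})$. $[\alpha_0,\dots,\alpha_{n-1}]$ is the smallest congruence $\gamma$ such that $\alpha_0,\dots,\alpha_{n-2}$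 centralize $\alpha_{n-1}$ modulo $\gamma$. *)

(* Defs.v *)
From Stdlib Require List.
From mathcomp Require Import all_boot.
Set Implicit Arguments. Unset Strict Implicit. Unset Printing Implicit Defensive.

Record algebra := Algebra {
  car : Type;
  sym : Type;
  ar : sym -> nat;
  op : forall f : sym, ('I_(ar f) -> car) -> car
}.

Definition brel (A : algebra) := car A -> car A -> Prop.

Inductive term (A : algebra) (V : Type) : Type :=
| Var : V -> term A V
| App : forall f : sym A, ('I_(ar f) -> term A V) -> term A V.

Fixpoint teval (A : algebra) (V : Type) (e : V -> car A) (t : term A V) : car A :=
  match t with
  | Var v => e v
  | App f ts => op (fun j => teval e (ts j))
  end.

Definition is_cong (A : algebra) (R : brel A) : Prop :=
  [/\ (forall x, R x x),
      (forall x y, R x y -> R y x),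
      (forall x y z, R x y -> R y z -> R x z) &
      (forall (f : sym A) (x y : 'I_(ar f) -> car A),
          (forall j, R (x j) (y j)) -> R (op x) (op y))].

Definition cjoin (A : algebra) (K : Type) (F : K -> brel A) : brel A :=
  fun x y => forall R : brel A, is_cong R ->
    (forall k u v, F k u v -> R u v) -> R x y.

Definition releq (A : algebra) (R S : brel A) : Prop :=
  forall x y, R x y <-> S x y.

(* Variables of a term operation t(x_0,...,x_{k-1}, x_k) where x_i (i<k) is a
   tuple of length m i and x_k is a tuple of length ml. *)
Definition cvars (k : nat) (m : 'I_k -> nat) (ml : nat) : Type :=
  ({i : 'I_k & 'I_(m i)} + 'I_ml)%type.

Definition cenv (A : algebra) (k : nat) (m : 'I_k -> nat) (ml : nat)
  (x : forall i : 'I_k, 'I_(m i) -> car A) (y : 'I_ml -> car A)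
  : cvars m ml -> car A :=
  fun v => match v with
           | inl p => x (projT1 p) (projT2 p)
           | inr j => y j
           end.

(* alpha_0,...,alpha_{k-1} centralize beta modulo gamma (Bulatov), with n = k+1. *)
Definition centralizes (A : algebra) (k : nat) (alpha : 'I_k -> brel A)
  (beta gamma : brel A) : Prop :=
  forall (m : 'I_k -> nat) (a b : forall i : 'I_k, 'I_(m i) -> car A)
         (ml : nat) (c d : 'I_ml -> car A) (t : term A (cvars m ml)),
    (forall i j, alpha i (a i j) (b i j)) ->
    (forall i, exists j, a i j <> b i j) ->
    (forall j, beta (c j) (d j)) ->
    (exists j, c j <> d j) ->
    (forall s : 'I_k -> bool, (exists i, s i = false) ->
       gamma (teval (cenv (fun i => if s i then b i else a i) c) t)
             (teval (cenv (fun i => if s i then b i else a i) d) t)) ->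
    gamma (teval (cenv b c) t) (teval (cenv b d) t).

Definition hcomm (A : algebra) (k : nat) (alpha : 'I_k -> brel A) (beta : brel A)
  : brel A :=
  fun x y => forall gamma : brel A, is_cong gamma ->
    centralizes alpha beta gamma -> gamma x y.

Definition fin_nonempty (I : Type) (J : I -> Prop) : Prop :=
  (exists s : list I, forall i, J i <-> List.In i s) /\ (exists i, J i).

(* Main.v *)
Require Import Defs.
From mathcomp Require Import all_boot.
From Stdlib Require Import FunctionalExtensionality.
From Stdlib Require List.
Import List (incl, incl_appl, incl_appr, incl_refl).
Set Implicit Arguments. Unset Strict Implicit.

Lemma cjoin_cong (A : algebra) K (F : K -> brel A) : is_cong (cjoin F).
Proof.
split.
- by move=> x R [Hr _ _ _] _; apply: Hr.
- by move=> x y H R HR HF; case: (HR) => _ Hs _ _; apply: Hs; apply: H.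
- by move=> x y z H1 H2 R HR HF; case: (HR) => _ _ Ht _; apply: (Ht _ y); [apply: H1|apply: H2].
- move=> f x y H R HR HF; case: (HR) => _ _ _ Ho; apply: Ho => j; exact: H.
Qed.

Lemma cjoin_ub (A : algebra) K (F : K -> brel A) k u v : F k u v -> cjoin F u v.
Proof. by move=> H R _ HR; exact: HR H. Qed.

Lemma hcomm_cong (A : algebra) k (alpha : 'I_k -> brel A) beta : is_cong (hcomm alpha beta).
Proof.
split.
- by move=> x g [Hr _ _ _] _; apply: Hr.
- by move=> x y H g Hg Hc; case: (Hg) => _ Hs _ _; apply: Hs; apply: H.
- by move=> x y z H1 H2 g Hg Hc; case: (Hg) => _ _ Ht _; apply: (Ht _ y); [apply: H1|apply: H2].
- move=> f x y H g Hg Hc; case: (Hg) => _ _ _ Ho; apply: Ho => j; exact: H.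
Qed.

Lemma hcomm_cent (A : algebra) k (alpha : 'I_k -> brel A) beta :
  centralizes alpha beta (hcomm alpha beta).
Proof.
move=> m a b ml c d t Ha Hne Hc Hne2 Hs g Hg Hcent.
apply: (Hcent) => //.
move=> s Hs'; exact: (Hs s Hs' g Hg Hcent).
Qed.

Lemma hcomm_mono (A : algebra) k (alpha : 'I_k -> brel A) (beta beta' : brel A) :
  (forall u v, beta u v -> beta' u v) ->
  forall x y, hcomm alpha beta x y -> hcomm alpha beta' x y.
Proof.
move=> Hb x y H g Hg Hc; apply: (H g Hg).
move=> m a b ml c d t Ha Hne Hcd Hne2 Hs; apply: Hc => // j; exact: Hb.
Qed.

Lemma fin_union (T : finType) (I : Type) (Q : T -> list I -> Prop) :
  (forall j s s', Q j s -> incl s s' -> Q j s') ->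
  (forall j, exists s, Q j s) -> exists s, forall j, Q j s.
Proof.
move=> Hm Hex.
suff: forall l : seq T, exists s, forall j, j \in l -> Q j s.
  by move=> /(_ (enum T)) [s Hs]; exists s => j; apply: Hs; rewrite mem_enum.
elim=> [|x l [s IH]]; first by exists nil => j; rewrite in_nil.
have [s1 H1] := Hex x; exists (List.app s1 s) => j; rewrite in_cons => /orP [/eqP ->|Hj].
- apply: Hm H1 _; apply incl_appl, incl_refl.
- apply: Hm (IH j Hj) _; apply incl_appr, incl_refl.
Qed.

Section Main.
Variables (A : algebra) (I : Type) (rho : I -> brel A) (hrho : forall i, is_cong (rho i)).

Definition cjoinL (s : list I) : brel A :=
  cjoin (fun i : {i : I | List.In i s} => rho (proj1_sig i)).

Lemma cjoinL_mono s s' : incl s s' -> forall u v, cjoinL s u v -> cjoinL s' u v.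
Proof.
move=> Hi u v H; apply: H; first exact: cjoin_cong.
move=> [i Hin] x y /= Hr; exact: (@cjoin_ub _ _ _ (exist _ i (Hi i Hin))).
Qed.

Lemma join_fin u v : cjoin rho u v -> exists s, cjoinL s u v.
Proof.
move=> H0; apply: (H0 (fun u v => exists s, cjoinL s u v)).

- split.
  + by move=> x; exists nil; case: (cjoin_cong (fun i : {i : I | List.In i nil} => rho (proj1_sig i))) => Hr _ _ _; exact: Hr.
  + move=> x y [s Hs]; exists s; by case: (cjoin_cong (fun i : {i : I | List.In i s} => rho (proj1_sig i))) => _ Hsy _ _; apply: Hsy.
  + move=> x y z [s1 H1] [s2 H2]; exists (List.app s1 s2).
    case: (cjoin_cong (fun i : {i : I | List.In i (List.app s1 s2)} => rho (proj1_sig i))) => _ _ Ht _.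
    apply: (Ht _ y).
    * apply: cjoinL_mono H1; apply incl_appl, incl_refl.
    * apply: cjoinL_mono H2; apply incl_appr, incl_refl.
  + move=> f x y Hxy.
    have [s Hs] := @fin_union _ _ (fun j s => cjoinL s (x j) (y j))
                     (fun j s s' Hj Hi => cjoinL_mono Hi Hj) Hxy.
    exists s; case: (cjoin_cong (fun i : {i : I | List.In i s} => rho (proj1_sig i))) => _ _ _ Ho.
    exact: Ho.
- move=> k x y Hr; exists (k :: nil).
  exact: (@cjoin_ub _ _ _ (exist (fun i => List.In i (k :: nil)) k (or_introl erefl))).
Qed.

End Main.

Theorem mainTheorem14 (A : algebra) (n : nat) (hn : 2 <= n)
  (I : Type) (hI : inhabited I)
  (rho : I -> brel A) (hrho : forall i, is_cong (rho i))
  (alpha : 'I_n.-1 -> brel A) (halpha : forall i, is_cong (alpha i)) :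
  releq (hcomm alpha (cjoin rho))
        (cjoin (fun J : {J : I -> Prop | fin_nonempty J} =>
                  hcomm alpha (cjoin (fun i : {i : I | proj1_sig J i} =>
                                        rho (proj1_sig i))))).
Proof.
case: hI => i0.
pose U := fun x y => exists s, hcomm alpha (cjoinL rho s) x y.
have Umono : forall s s' x y, incl s s' -> hcomm alpha (cjoinL rho s) x y ->
    hcomm alpha (cjoinL rho s') x y.
  move=> s s' x y Hi; apply: hcomm_mono; exact: cjoinL_mono.
move=> x y; split.
- move=> H.
  have Ucong : is_cong U.
    split.
    + move=> z; exists nil; by case: (hcomm_cong alpha (cjoinL rho nil)) => Hr _ _ _; exact: Hr.
    + move=> u v [s Hs]; exists s; by case: (hcomm_cong alpha (cjoinL rho s)) => _ Hsy _ _; apply: Hsy.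
    + move=> u v w [s1 H1] [s2 H2]; exists (List.app s1 s2).
      case: (hcomm_cong alpha (cjoinL rho (List.app s1 s2))) => _ _ Ht _.
      apply: (Ht _ v).
      * apply: Umono H1; apply incl_appl, incl_refl.
      * apply: Umono H2; apply incl_appr, incl_refl.
    + move=> f u v Huv.
      have [s Hs] := @fin_union _ _ (fun j s => hcomm alpha (cjoinL rho s) (u j) (v j))
                     (fun j s s' Hj Hi => Umono _ _ _ _ Hi Hj) Huv.
      exists s; case: (hcomm_cong alpha (cjoinL rho s)) => _ _ _ Ho; exact: Ho.
  have Ucent : centralizes alpha (cjoin rho) U.
    move=> m a b ml c d t Ha Hne Hcd Hne2 Hs.
    have [s1 H1] : exists s, forall j, cjoinL rho s (c j) (d j).
      apply: (@fin_union _ _ (fun j s => cjoinL rho s (c j) (d j))).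
        by move=> j s s' Hj Hi; exact: cjoinL_mono Hj.
      move=> j; exact: join_fin (Hcd j).
    have [s2 H2] : exists s, forall f : {ffun 'I_(n.-1) -> bool}, (exists i, f i = false) ->
        hcomm alpha (cjoinL rho s)
          (teval (cenv (fun i => if f i then b i else a i) c) t)
          (teval (cenv (fun i => if f i then b i else a i) d) t).
      apply: fin_union.
        by move=> f s s' Hf Hi Hx; apply: Umono (Hf Hx).
      move=> f; case: (pickP (fun i => f i == false)) => [i Hi|Hn].
        have [s Hs0] := Hs (fun i => f i) (ex_intro _ i (eqP Hi)).
        by exists s.
      by exists nil => -[i Hi]; have := Hn i; rewrite Hi.
    exists (List.app s1 s2).
    apply: (hcomm_cent (m:=m) Ha Hne _ Hne2).
      move=> j; apply: cjoinL_mono (H1 j); apply incl_appl, incl_refl.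
    move=> s [i Hi].
    have := H2 [ffun i => s i] (ex_intro _ i (etrans (ffunE _ _) Hi)).
    have E : (fun i => if [ffun i0 => s i0] i then b i else a i) =
             (fun i => if s i then b i else a i).
      by apply: functional_extensionality_dep => j; rewrite ffunE.
    rewrite E; apply: Umono; apply incl_appr, incl_refl.
  have [s Hs] := H U Ucong Ucent.
  move=> R HR HF.
  have pf : fin_nonempty (fun i => List.In i (i0 :: s)).
    by split; [exists (i0 :: s) => i; split | exists i0; left].
  apply: (HF (exist _ _ pf)) => /=.
  apply: (Umono s (i0 :: s) x y _ Hs); move=> z Hz; right; exact: Hz.
- move=> H; apply: H; first exact: hcomm_cong.
  move=> [J HJ] u v /=; apply: hcomm_mono => p q Hpq.
  apply: Hpq; first exact: cjoin_cong.
  move=> [i Hi] z w /= Hr; exact: cjoin_ub Hr.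
Qed.
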